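(* Let $\Omega\subseteq\mathbb{R}^2$ be open and let $f=(\phi_1,\phi_2):\Omega\to\mathbb{R}^2$ be a smooth plane transformation. For a nondegenerate triangle with vertices $a,b,c\in\mathbb{R}^2$, let $a'$ denote the mirror vertex of $a$, i.e. the reflection of $a$ across the line through $b$ and $c$. Then for every $x\in\Omega$, $$\lim \frac{\det\big(f(a')-f(a),\; f(c)-f(b)\big)}{2\det\big(b-a,\; c-b\big)} \;=\; \det Df(x)=\partial_1\phi_1(x)\,\partial_2\phi_2(x)-\partial_2\phi_1(x)\,\partial_1\phi_2(x),$$ where the limit is taken as $(a,b,c)\to(x,x,x)$ in $\mathbb{R}^2\times\mathbb{R}^2\times\mathbb{R}^2$, over triples $(a,b,c)$ such that the triangle $a,b,c$ is nondegenerate (i.e. $\det(b-a,c-b)\neq 0$) and the mirror vertex $a'$ is balanced (and $a,b,c,a'\in\Omega$, which holds automatically for such triples close enough to $x$).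
   Context: $\det(u,v)$ denotes the determinant of the $2\times 2$ matrix with rows $u,v\in\mathbb{R}^2$; equivalently $\det(b-a,c-b)=(a\wedge b+b\wedge c+c\wedge a)\cdot\mathbb{I}_2$ in the Clifford algebra of $\mathbb{R}^2$. A real function $\psi:\Omega\to\mathbb{R}$ on an open set $\Omega\subseteq\mathbb{R}^2$ is called smooth if it is $C^2$ on $\Omega$ and $\sup_{x\in\Omega}\max\{|\lambda_1(x)|,|\lambda_2(x)|\}<\infty$, where $\lambda_1(x),\lambda_2(x)$ are the eigenvalues of the Hessian matrix of $\psi$ at $x$. A transformation $f:\Omega\to\mathbb{R}^2$ is smooth if both components $\phi_1,\phi_2$ are smooth functions. For a nondegenerate triangle with vertices $a,b,c$, the mirror vertex of $a$ is $a'=-\big[a+2b\frac{(a-c)\cdot(c-b)}{|c-b|^2}+2c\frac{(b-a)\cdot(c-b)}{|c-b|^2}\big]$, the reflection of $a$ across the line through $b,c$. The mirror vertex $a'$ is called balanced if the point $\bar a=\frac12(a+a')$ (the foot of the perpendicular from $a$ to the line $bc$) lies in the closed segment $[b,c]$. *)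

(* Defs.v *)
From Stdlib Require Import Reals.
From Coquelicot Require Import Coquelicot.
Open Scope R_scope.

Definition padd (u v : R * R) : R * R := (fst u + fst v, snd u + snd v).
Definition psub (u v : R * R) : R * R := (fst u - fst v, snd u - snd v).
Definition pscal (k : R) (u : R * R) : R * R := (k * fst u, k * snd u).
Definition dot (u v : R * R) : R := fst u * fst v + snd u * snd v.
Definition norm2 (u : R * R) : R := dot u u.
Definition pdist (u v : R * R) : R := sqrt (norm2 (psub u v)).

Definition det2 (u v : R * R) : R := fst u * snd v - snd u * fst v.

Definition d1 (psi : R * R -> R) (x : R * R) : R :=
  Derive (fun t => psi (t, snd x)) (fst x).
Definition d2 (psi : R * R -> R) (x : R * R) : R :=
  Derive (fun t => psi (fst x, t)) (snd x).

Definition has_partials_on (Omega : R * R -> Prop) (psi : R * R -> R) : Prop :=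
  forall x, Omega x ->
    ex_derive (fun t => psi (t, snd x)) (fst x) /\
    ex_derive (fun t => psi (fst x, t)) (snd x).

Definition C1_on (Omega : R * R -> Prop) (psi : R * R -> R) : Prop :=
  has_partials_on Omega psi /\
  (forall x, Omega x -> continuous psi x /\ continuous (d1 psi) x /\ continuous (d2 psi) x).

Definition C2_on (Omega : R * R -> Prop) (psi : R * R -> R) : Prop :=
  C1_on Omega psi /\ C1_on Omega (d1 psi) /\ C1_on Omega (d2 psi).

Definition hess11 psi x := d1 (d1 psi) x.
Definition hess12 psi x := d2 (d1 psi) x.
Definition hess21 psi x := d1 (d2 psi) x.
Definition hess22 psi x := d2 (d2 psi) x.

Definition is_eigenvalue2 (m11 m12 m21 m22 lam : R) : Prop :=
  exists v1 v2 : R, (v1 <> 0 \/ v2 <> 0) /\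
    m11 * v1 + m12 * v2 = lam * v1 /\ m21 * v1 + m22 * v2 = lam * v2.

Definition smooth_fun (Omega : R * R -> Prop) (psi : R * R -> R) : Prop :=
  C2_on Omega psi /\
  exists M : R, forall x lam, Omega x ->
    is_eigenvalue2 (hess11 psi x) (hess12 psi x) (hess21 psi x) (hess22 psi x) lam ->
    Rabs lam <= M.

Definition smooth_map (Omega : R * R -> Prop) (f : R * R -> R * R) : Prop :=
  smooth_fun Omega (fun x => fst (f x)) /\ smooth_fun Omega (fun x => snd (f x)).

Definition jac_det (f : R * R -> R * R) (x : R * R) : R :=
  let phi1 := fun y => fst (f y) in
  let phi2 := fun y => snd (f y) in
  d1 phi1 x * d2 phi2 x - d2 phi1 x * d1 phi2 x.

Definition mirror (a b c : R * R) : R * R :=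
  pscal (-1)
    (padd a
      (padd (pscal (2 * dot (psub a c) (psub c b) / norm2 (psub c b)) b)
            (pscal (2 * dot (psub b a) (psub c b) / norm2 (psub c b)) c))).

Definition nondegenerate (a b c : R * R) : Prop := det2 (psub b a) (psub c b) <> 0.

Definition balanced (a b c : R * R) : Prop :=
  exists t : R, 0 <= t <= 1 /\
    pscal (1/2) (padd a (mirror a b c)) = padd (pscal (1 - t) b) (pscal t c).

Definition mirror_ratio (f : R * R -> R * R) (a b c : R * R) : R :=
  det2 (psub (f (mirror a b c)) (f a)) (psub (f c) (f b))
  / (2 * det2 (psub b a) (psub c b)).

(* Main.v *)
Require Import Defs.
From Stdlib Require Import Reals Lra Psatz.
From Coquelicot Require Import Coquelicot.
Open Scope R_scope.

Lemma absle (x y : R) : Rabs x <= y -> -y <= x <= y.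
Proof. unfold Rabs; destruct (Rcase_abs x); lra. Qed.
Lemma absle' (x y : R) : -y <= x <= y -> Rabs x <= y.
Proof. unfold Rabs; destruct (Rcase_abs x); lra. Qed.
Lemma abs_sq (x : R) : Rabs x * Rabs x = x * x.
Proof. unfold Rabs; destruct (Rcase_abs x); lra. Qed.

Lemma prod_bound (x y A B : R) : Rabs x <= A -> Rabs y <= B -> Rabs (x*y) <= A*B.
Proof.
  intros H1 H2. rewrite Rabs_mult. apply Rmult_le_compat; auto using Rabs_pos.
Qed.

Lemma lin_bound (al be u1 u2 M : R) : Rabs al <= M -> Rabs be <= M ->
  Rabs (al*u1 + be*u2) <= M * (Rabs u1 + Rabs u2).
Proof.
  intros H1 H2. eapply Rle_trans. apply Rabs_triang.
  pose proof (prod_bound al u1 M (Rabs u1) H1 (Rle_refl _)).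
  pose proof (prod_bound be u2 M (Rabs u2) H2 (Rle_refl _)). lra.
Qed.

Lemma SS_bound (u1 u2 v1 v2 : R) : u1*v1 + u2*v2 = 0 ->
  (Rabs u1 + Rabs u2) * (Rabs v1 + Rabs v2) <= 2 * Rabs (u1*v2 - u2*v1).
Proof.
  intros Hd.
  pose proof (abs_sq u1). pose proof (abs_sq u2). pose proof (abs_sq v1). pose proof (abs_sq v2).
  pose proof (abs_sq (u1*v2 - u2*v1)).
  pose proof (Rabs_pos u1). pose proof (Rabs_pos u2). pose proof (Rabs_pos v1). pose proof (Rabs_pos v2).
  pose proof (Rabs_pos (u1*v2 - u2*v1)).
  set (A := Rabs u1 + Rabs u2). set (B := Rabs v1 + Rabs v2).
  assert (Hsu : A*A <= 2*(u1*u1+u2*u2)).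
  { unfold A. pose proof (Rle_0_sqr (Rabs u1 - Rabs u2)). unfold Rsqr in *. nra. }
  assert (Hsv : B*B <= 2*(v1*v1+v2*v2)).
  { unfold B. pose proof (Rle_0_sqr (Rabs v1 - Rabs v2)). unfold Rsqr in *. nra. }
  assert (HL : (u1*u1+u2*u2)*(v1*v1+v2*v2) = (u1*v2-u2*v1)*(u1*v2-u2*v1) + (u1*v1+u2*v2)*(u1*v1+u2*v2)) by ring.
  rewrite Hd in HL.
  assert (0 <= A*A) by nra. assert (0 <= B*B) by nra.
  assert (HAB : (A*A)*(B*B) <= (2*(u1*u1+u2*u2)) * (2*(v1*v1+v2*v2))).
  { apply Rmult_le_compat; auto. }
  assert (HS2 : (A*B)*(A*B) <= (2*Rabs (u1*v2 - u2*v1))*(2*Rabs (u1*v2 - u2*v1))).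
  { nra. }
  assert (0 <= A) by (unfold A; lra). assert (0 <= B) by (unfold B; lra).
  assert (0 <= A*B) by nra.
  destruct (Rle_or_lt (A*B) (2 * Rabs (u1*v2 - u2*v1))); auto.
  exfalso. nra.
Qed.

Lemma alg (u1 u2 v1 v2 a b c d p1 p2 q1 q2 s1 s2 t1 t2 eta K : R) :
  0 <= eta -> Rabs a <= K -> Rabs b <= K -> Rabs c <= K -> Rabs d <= K ->
  Rabs (p1 - a) <= eta -> Rabs (p2 - b) <= eta -> Rabs (q1 - c) <= eta -> Rabs (q2 - d) <= eta ->
  Rabs (s1 - a) <= eta -> Rabs (s2 - b) <= eta -> Rabs (t1 - c) <= eta -> Rabs (t2 - d) <= eta ->
  u1*v1 + u2*v2 = 0 -> u1*v2 - u2*v1 <> 0 ->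
  Rabs (((p1*u1 + p2*u2) * (t1*v1 + t2*v2) - (q1*u1 + q2*u2) * (s1*v1 + s2*v2)) / (u1*v2 - u2*v1)
        - (a*d - b*c)) <= 4 * (2*K*eta + eta*eta).
Proof.
  intros He Ha Hb Hc Hd Hp1 Hp2 Hq1 Hq2 Hs1 Hs2 Ht1 Ht2 Hdot HD.
  set (Su := Rabs u1 + Rabs u2). set (Sv := Rabs v1 + Rabs v2).
  set (D := u1*v2 - u2*v1).
  set (X1 := a*u1 + b*u2). set (X2 := c*u1 + d*u2).
  set (Y1 := a*v1 + b*v2). set (Y2 := c*v1 + d*v2).
  set (x1 := (p1-a)*u1 + (p2-b)*u2). set (x2 := (q1-c)*u1 + (q2-d)*u2).
  set (y1 := (s1-a)*v1 + (s2-b)*v2). set (y2 := (t1-c)*v1 + (t2-d)*v2).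
  assert (BX1 : Rabs X1 <= K*Su) by (apply lin_bound; auto).
  assert (BX2 : Rabs X2 <= K*Su) by (apply lin_bound; auto).
  assert (BY1 : Rabs Y1 <= K*Sv) by (apply lin_bound; auto).
  assert (BY2 : Rabs Y2 <= K*Sv) by (apply lin_bound; auto).
  assert (Bx1 : Rabs x1 <= eta*Su) by (apply lin_bound; auto).
  assert (Bx2 : Rabs x2 <= eta*Su) by (apply lin_bound; auto).
  assert (By1 : Rabs y1 <= eta*Sv) by (apply lin_bound; auto).
  assert (By2 : Rabs y2 <= eta*Sv) by (apply lin_bound; auto).
  set (E := X1*y2 + x1*Y2 + x1*y2 - X2*y1 - x2*Y1 - x2*y1).
  assert (HE : Rabs E <= 2*(2*K*eta + eta*eta) * (Su*Sv)).
  { apply absle'.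

    pose proof (absle _ _ (prod_bound _ _ _ _ BX1 By2)).
    pose proof (absle _ _ (prod_bound _ _ _ _ Bx1 BY2)).
    pose proof (absle _ _ (prod_bound _ _ _ _ Bx1 By2)).
    pose proof (absle _ _ (prod_bound _ _ _ _ BX2 By1)).
    pose proof (absle _ _ (prod_bound _ _ _ _ Bx2 BY1)).
    pose proof (absle _ _ (prod_bound _ _ _ _ Bx2 By1)).
    unfold E. split; lra. }
  assert (Heq : ((p1*u1 + p2*u2) * (t1*v1 + t2*v2) - (q1*u1 + q2*u2) * (s1*v1 + s2*v2)) / D
        - (a*d - b*c) = E / D).
  { unfold E, X1, X2, Y1, Y2, x1, x2, y1, y2, D. field. exact HD. }
  rewrite Heq.
  pose proof (SS_bound u1 u2 v1 v2 Hdot) as HSS. fold Su Sv D in HSS.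
  assert (HK : 0 <= K) by (pose proof (Rabs_pos a); lra).
  assert (Hc' : 0 <= 2*K*eta + eta*eta) by nra.
  assert (HE2 : Rabs E <= 4*(2*K*eta + eta*eta) * Rabs D).
  { eapply Rle_trans. exact HE.
    replace (4*(2*K*eta + eta*eta) * Rabs D) with (2*(2*K*eta + eta*eta) * (2 * Rabs D)) by ring.
    apply Rmult_le_compat_l; lra. }
  assert (HDp : 0 < Rabs D) by (apply Rabs_pos_lt; exact HD).
  unfold Rdiv. rewrite Rabs_mult, Rabs_inv.
  apply (Rmult_le_reg_r (Rabs D)); auto.
  rewrite Rmult_assoc, Rinv_l by lra. lra.
Qed.
Lemma ball_R2 (x y : R*R) (e:R) : Rabs (fst y - fst x) < e -> Rabs (snd y - snd x) < e -> ball x e y.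
Proof. destruct x, y; simpl; intros; split; assumption. Qed.

Lemma between_abs (a b t x r : R) : Rabs (a - x) < r -> Rabs (b - x) < r ->
  Rmin a b <= t <= Rmax a b -> Rabs (t - x) < r.
Proof.
  intros Ha Hb Ht. apply Rabs_def2 in Ha. apply Rabs_def2 in Hb.
  apply Rabs_def1; unfold Rmin, Rmax in Ht; destruct (Rle_dec a b); lra.
Qed.

Lemma cont_eps (g : R*R -> R) x : continuous g x -> forall eta, 0 < eta ->
  exists e, 0 < e /\ forall y, ball x e y -> Rabs (g y - g x) < eta.
Proof.
  intros H eta He. unfold continuous in H. rewrite filterlim_locally in H.
  destruct (H (mkposreal eta He)) as [e He2].
  exists e. split. apply cond_pos. intros y Hy. apply (He2 y Hy).
Qed.

Lemma mvt2 (Omega : R*R -> Prop) (psi : R*R -> R) x :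
  open Omega -> has_partials_on Omega psi -> Omega x ->
  continuous (Defs.d1 psi) x -> continuous (Defs.d2 psi) x ->
  forall eta, 0 < eta -> exists r, 0 < r /\ forall b c : R*R,
    Rabs (fst b - fst x) < r -> Rabs (snd b - snd x) < r ->
    Rabs (fst c - fst x) < r -> Rabs (snd c - snd x) < r ->
    exists p1 p2, Rabs (p1 - Defs.d1 psi x) < eta /\ Rabs (p2 - Defs.d2 psi x) < eta /\
      psi c - psi b = p1 * (fst c - fst b) + p2 * (snd c - snd b).
Proof.
  intros Hop Hp Hx C1 C2 eta Heta.
  destruct (Hop x Hx) as [e1 He1].
  destruct (cont_eps _ _ C1 eta Heta) as [e2 [He2 H2]].
  destruct (cont_eps _ _ C2 eta Heta) as [e3 [He3 H3]].
  pose proof (cond_pos e1) as He1p.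
  exists (Rmin e1 (Rmin e2 e3)). split.
  { repeat apply Rmin_pos; assumption. }
  intros [b1 b2] [c1 c2]; simpl. intros Hb1 Hb2 Hc1 Hc2.
  assert (Hr1 := Rmin_l e1 (Rmin e2 e3)).
  assert (Hr2 := Rmin_l e2 e3). assert (Hr3 := Rmin_r e2 e3).
  assert (Hr4 := Rmin_r e1 (Rmin e2 e3)).
  set (r := Rmin e1 (Rmin e2 e3)) in *.
  destruct (MVT_gen (fun t => psi (t, c2)) b1 c1 (fun t => Defs.d1 psi (t, c2))) as [xi [Hxi E1]].
  { intros t Ht. assert (Hin : Omega (t, c2)).
    { apply He1. apply ball_R2; simpl.
      - apply (between_abs b1 c1); try lra.
      - lra. }
    destruct (Hp _ Hin) as [D1 _]. simpl in D1. unfold Defs.d1; simpl.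
    apply Derive_correct; exact D1. }
  { intros t Ht. assert (Hin : Omega (t, c2)).
    { apply He1. apply ball_R2; simpl.
      - apply (between_abs b1 c1); try lra.
      - lra. }
    destruct (Hp _ Hin) as [D1 _]. simpl in D1.
    apply continuity_pt_filterlim. apply (ex_derive_continuous (K:=R_AbsRing) (V:=R_NormedModule)); exact D1. }
  destruct (MVT_gen (fun t => psi (b1, t)) b2 c2 (fun t => Defs.d2 psi (b1, t))) as [zeta [Hz E2]].
  { intros t Ht. assert (Hin : Omega (b1, t)).
    { apply He1. apply ball_R2; simpl.
      - lra.
      - apply (between_abs b2 c2); try lra. }
    destruct (Hp _ Hin) as [_ D2]. simpl in D2. unfold Defs.d2; simpl.
    apply Derive_correct; exact D2. }
  { intros t Ht. assert (Hin : Omega (b1, t)).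
    { apply He1. apply ball_R2; simpl.
      - lra.
      - apply (between_abs b2 c2); try lra. }
    destruct (Hp _ Hin) as [_ D2]. simpl in D2.
    apply continuity_pt_filterlim. apply (ex_derive_continuous (K:=R_AbsRing) (V:=R_NormedModule)); exact D2. }
  simpl in E1, E2.
  exists (Defs.d1 psi (xi, c2)), (Defs.d2 psi (b1, zeta)). split; [|split].
  - apply H2. apply ball_R2; simpl.
    + assert (Rabs (xi - fst x) < r) by (apply (between_abs b1 c1 xi (fst x) r); try lra; exact Hxi). lra.
    + lra.
  - apply H3. apply ball_R2; simpl.
    + lra.
    + assert (Rabs (zeta - snd x) < r) by (apply (between_abs b2 c2 zeta (snd x) r); try lra; exact Hz). lra.
  - lra.
Qed.

Lemma mirror_geom (a1 a2 b1 b2 c1 c2 : R) :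
  (b1 - a1) * (c2 - b2) - (b2 - a2) * (c1 - b1) <> 0 ->
  forall m, m = mirror (a1,a2) (b1,b2) (c1,c2) ->
  ((fst m - a1)*(c1 - b1) + (snd m - a2)*(c2 - b2) = 0) /\ ((fst m - a1)*(c2 - b2) - (snd m - a2)*(c1 - b1) = 2*((b1 - a1) * (c2 - b2) - (b2 - a2) * (c1 - b1))) /\ ((fst m - a1)*(fst m - a1) + (snd m - a2)*(snd m - a2) <= 4*((b1-a1)*(b1-a1) + (b2-a2)*(b2-a2))).
Proof.
  intros Hnd m Hm.
  assert (HL : (c1 - b1)*(c1 - b1) + (c2 - b2)*(c2 - b2) <> 0).
  { intro H0. pose proof (Rle_0_sqr (c1-b1)) as S1. pose proof (Rle_0_sqr (c2-b2)) as S2. unfold Rsqr in *.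
    assert (Z1 : (c1 - b1)*(c1-b1) = 0) by lra. assert (Z2 : (c2 - b2)*(c2-b2) = 0) by lra.
    apply Rmult_integral in Z1. apply Rmult_integral in Z2.
    assert (Y1 : c1 - b1 = 0) by tauto. assert (Y2 : c2 - b2 = 0) by tauto. apply Hnd.
    rewrite Y1, Y2. ring. }
  set (k := ((b1 - a1)*(c1 - b1) + (b2 - a2)*(c2 - b2))/((c1 - b1)*(c1 - b1) + (c2 - b2)*(c2 - b2))).
  assert (E1 : fst m - a1 = 2*((b1 - a1) - k*(c1 - b1))).
  { rewrite Hm. unfold mirror, norm2, pscal, padd, dot, psub, k; simpl. field. exact HL. }
  assert (E2 : snd m - a2 = 2*((b2 - a2) - k*(c2 - b2))).
  { rewrite Hm. unfold mirror, norm2, pscal, padd, dot, psub, k; simpl. field. exact HL. }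
  rewrite E1, E2.
  assert (Hk : k*((c1 - b1)*(c1 - b1) + (c2 - b2)*(c2 - b2)) = (b1 - a1)*(c1 - b1) + (b2 - a2)*(c2 - b2)) by (unfold k; field; exact HL).
  clearbody k.
  set (v1 := c1 - b1) in *; set (v2 := c2 - b2) in *; set (w1 := b1 - a1) in *; set (w2 := b2 - a2) in *.
  split; [|split].
  - nra.
  - ring.
  - assert (0 <= k*k*(v1*v1+v2*v2)) by (pose proof (Rle_0_sqr k); pose proof (Rle_0_sqr v1); pose proof (Rle_0_sqr v2); unfold Rsqr in *; nra).
    assert (EQ : (2*(w1-k*v1))*(2*(w1-k*v1)) + (2*(w2-k*v2))*(2*(w2-k*v2)) = 4*(w1*w1+w2*w2) - 8*k*(k*(v1*v1+v2*v2)) + 4*(k*k*(v1*v1+v2*v2))) by (rewrite Hk; ring). lra.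
Qed.

Lemma pdist_coord (a x : R*R) (d : R) : pdist a x < d ->
  Rabs (fst a - fst x) < d /\ Rabs (snd a - snd x) < d.
Proof.
  unfold pdist, norm2, dot, psub; simpl. intros H.
  set (p := fst a - fst x) in *. set (q := snd a - snd x) in *.
  pose proof (Rle_0_sqr p) as Sp. pose proof (Rle_0_sqr q) as Sq. unfold Rsqr in Sp, Sq.
  set (s := p*p + q*q) in H.
  assert (Hs : 0 <= s) by (unfold s; lra).
  assert (Hd : 0 <= sqrt s) by apply sqrt_pos.
  assert (Hss : sqrt s * sqrt s = s) by (apply sqrt_sqrt; exact Hs).
  assert (Hsd : s < d*d) by nra.
  assert (d0 : 0 < d) by lra.
  unfold s in Hsd. split; unfold Rabs; destruct (Rcase_abs _); nra.
Qed.

Theorem theorem1 (Omega : R * R -> Prop) (f : R * R -> R * R) :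
  open Omega -> smooth_map Omega f ->
  forall x : R * R, Omega x ->
  forall eps : R, 0 < eps ->
  exists delta : R, 0 < delta /\
    forall a b c : R * R,
      pdist a x < delta -> pdist b x < delta -> pdist c x < delta ->
      nondegenerate a b c -> balanced a b c ->
      Omega a -> Omega b -> Omega c -> Omega (mirror a b c) ->
      Rabs (mirror_ratio f a b c - jac_det f x) < eps.
Proof.
  intros Hop [S1 S2] x Hx eps Heps.
  destruct S1 as [[[P1 C1] _] _]. destruct S2 as [[[P2 C2] _] _].
  destruct (C1 x Hx) as [_ [C11 C12]]. destruct (C2 x Hx) as [_ [C21 C22]].
  set (A := Defs.d1 (fun y => fst (f y)) x). set (B := Defs.d2 (fun y => fst (f y)) x).
  set (Cc := Defs.d1 (fun y => snd (f y)) x). set (Dd := Defs.d2 (fun y => snd (f y)) x).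
  set (K := Rabs A + Rabs B + Rabs Cc + Rabs Dd + 1).
  assert (HK : 1 <= K).
  { unfold K. pose proof (Rabs_pos A). pose proof (Rabs_pos B).
    pose proof (Rabs_pos Cc). pose proof (Rabs_pos Dd). lra. }
  assert (HKA : Rabs A <= K /\ Rabs B <= K /\ Rabs Cc <= K /\ Rabs Dd <= K).
  { unfold K. pose proof (Rabs_pos A). pose proof (Rabs_pos B).
    pose proof (Rabs_pos Cc). pose proof (Rabs_pos Dd). lra. }
  set (eta := Rmin 1 (eps / (8*(2*K+1)))).
  assert (Heta1 : eta <= 1) by apply Rmin_l.
  assert (Heta2 : eta <= eps / (8*(2*K+1))) by apply Rmin_r.
  assert (Heta : 0 < eta).
  { apply Rmin_pos. lra. apply Rdiv_lt_0_compat; lra. }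
  assert (Hfin : 4 * (2*K*eta + eta*eta) < eps).
  { assert (eta * (8*(2*K+1)) <= eps).
    { apply (Rmult_le_compat_r (8*(2*K+1))) in Heta2; [|lra].
      unfold Rdiv in Heta2. rewrite Rmult_assoc, Rinv_l in Heta2 by lra. lra. }
    nra. }
  destruct (mvt2 Omega _ x Hop P1 Hx C11 C12 eta Heta) as [r1 [Hr1 M1]].
  destruct (mvt2 Omega _ x Hop P2 Hx C21 C22 eta Heta) as [r2 [Hr2 M2]].
  assert (Hr : 0 < Rmin r1 r2) by (apply Rmin_pos; lra).
  pose proof (Rmin_l r1 r2). pose proof (Rmin_r r1 r2).
  set (r := Rmin r1 r2) in *.
  exists (r / 7). split. lra.
  intros a b c Ha Hb Hc Hnd _ _ _ _ _.
  apply pdist_coord in Ha, Hb, Hc.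
  destruct a as [a1 a2], b as [b1 b2], c as [c1 c2]. simpl in Ha, Hb, Hc.
  destruct Ha as [Ha1 Ha2], Hb as [Hb1 Hb2], Hc as [Hc1 Hc2].
  unfold nondegenerate, det2, psub in Hnd; simpl in Hnd.
  destruct (mirror_geom a1 a2 b1 b2 c1 c2 Hnd _ eq_refl) as [G1 [G2 G3]].
  change (jac_det f x) with (A*Dd - B*Cc).
  unfold mirror_ratio, det2, psub.
  set (m := mirror (a1,a2) (b1,b2) (c1,c2)) in *. clearbody m. cbn [fst snd].
  apply Rabs_def2 in Ha1, Ha2, Hb1, Hb2, Hc1, Hc2.
  assert (W : (b1-a1)*(b1-a1) + (b2-a2)*(b2-a2) < 8 * (r/7) * (r/7)) by nra.
  assert (Hm1 : Rabs (fst m - fst x) < r).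
  { assert (Q : (fst m - a1)*(fst m - a1) < 36 * (r/7)*(r/7)).
    { pose proof (Rle_0_sqr (snd m - a2)). unfold Rsqr in *. nra. }
    assert (Q' : Rabs (fst m - a1) < 6 * (r/7)).
    { unfold Rabs; destruct (Rcase_abs _); nra. }
    apply Rabs_def2 in Q'. apply Rabs_def1; lra. }
  assert (Hm2 : Rabs (snd m - snd x) < r).
  { assert (Q : (snd m - a2)*(snd m - a2) < 36 * (r/7)*(r/7)).
    { pose proof (Rle_0_sqr (fst m - a1)). unfold Rsqr in *. nra. }
    assert (Q' : Rabs (snd m - a2) < 6 * (r/7)).
    { unfold Rabs; destruct (Rcase_abs _); nra. }
    apply Rabs_def2 in Q'. apply Rabs_def1; lra. }
  assert (L : forall y z, y - z < r/7 /\ - (r/7) < y - z -> Rabs (y - z) < r1 /\ Rabs (y - z) < r2).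
  { intros y z Hyz. split; apply Rabs_def1; lra. }
  destruct (L _ _ Ha1) as [Ha1' Ha1''], (L _ _ Ha2) as [Ha2' Ha2''].
  destruct (L _ _ Hb1) as [Hb1' Hb1''], (L _ _ Hb2) as [Hb2' Hb2''].
  destruct (L _ _ Hc1) as [Hc1' Hc1''], (L _ _ Hc2) as [Hc2' Hc2''].
  destruct (M1 (a1,a2) m Ha1' Ha2' ltac:(lra) ltac:(lra)) as [p1 [p2 [Ep1 [Ep2 E1]]]].
  destruct (M2 (a1,a2) m Ha1'' Ha2'' ltac:(lra) ltac:(lra)) as [q1 [q2 [Eq1 [Eq2 E2]]]].
  destruct (M1 (b1,b2) (c1,c2) Hb1' Hb2' Hc1' Hc2') as [s1 [s2 [Es1 [Es2 E3]]]].
  destruct (M2 (b1,b2) (c1,c2) Hb1'' Hb2'' Hc1'' Hc2'') as [t1 [t2 [Et1 [Et2 E4]]]].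
  cbn [fst snd] in E1, E2, E3, E4.
  rewrite E1, E2, E3, E4, <- G2.
  destruct HKA as [KA [KB [KC KD]]].
  eapply Rle_lt_trans; [|exact Hfin].
  apply alg; try (apply Rlt_le; assumption); try lra.
Qed.
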